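(* Let $T \subseteq \mathbb{Z}_2^\omega$ be a thin set such that $T\cap X\neq\emptyset$ for every equivalence class $X$ of the relation $\sim$ on $\mathbb{Z}_2^\omega$. Then $T$ is not a Borel subset of $\mathbb{Z}_2^\omega$.
   Context: $\mathbb{Z}_2^\omega$ is the Cantor cube of infinite binary sequences indexed by $\omega=\{0,1,2,\dots\}$, with the product (Tychonoff) topology. The Hamming distance is $\mathrm{hd}(x,y)=|\{k: x(k)\ne y(k)\}|\in\omega\cup\{\omega\}$, and $x\sim y$ iff $\mathrm{hd}(x,y)$ is finite. A set $T\subseteq\mathbb{Z}_2^\omega$ is thin if for every $n\in\omega$ the map $x\mapsto x|_{\omega\setminus\{n\}}$ is injective on $T$ (equivalently, no two distinct elements of $T$ differ in exactly one coordinate). *)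

(* Defs.v *)
From HB Require Import structures.
From mathcomp Require Import all_boot all_order all_algebra.
From mathcomp Require Import all_classical all_reals all_analysis.
Set Implicit Arguments. Unset Strict Implicit. Unset Printing Implicit Defensive.
Local Open Scope classical_set_scope.

(* Z_2^omega with the product topology is mathcomp-analysis' [cantor_space]
   (= prod_topology (fun _ : nat => bool)). *)

Definition borel_set (T : topologicalType) (A : set T) : Prop :=
  <<s open >> A.

Definition hamming_equiv (x y : cantor_space) : Prop :=
  finite_set [set k : nat | x k != y k].

(* Thin: for each n, x |-> x restricted to omega \ {n} is injective on T. *)
Definition thin (T : set cantor_space) : Prop :=
  forall (n : nat) (x y : cantor_space), T x -> T y ->
    (forall k : nat, k <> n -> x k = y k) -> x = y.

(* Main.v *)
Require Import Defs.
From HB Require Import structures.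
From mathcomp Require Import all_boot all_order all_algebra.
From mathcomp Require Import all_classical all_reals all_analysis.
Local Open Scope classical_set_scope.

Definition agree (n : nat) (x y : cantor_space) := forall i, (i < n)%N -> x i = y i.
Definition copen (U : set cantor_space) :=
  forall x, U x -> exists n, forall z, agree n z x -> U z.

Lemma open_copen (U : set cantor_space) : open U -> copen U.
Proof.
move=> oU x Ux; apply: contrapT => /forallNP H.
have H' : forall N, exists g : cantor_space, agree N g x /\ ~ U g.
  move=> N; have := H N; move=> /existsNP[g /not_implyP [? ?]]; by exists g.
have [g gP] := choice H'.
have gcvg : g @ \oo --> (x : cantor_space).
  apply/cvg_sup => N V [W] [[W'] oW <-] WfN WV.
  apply: (filterS WV); rewrite nbhs_simpl; exists N.+1 => // i /= Ni.
  by rewrite (proj1 (gP i)).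
have : nbhs x U by apply: open_nbhs_nbhs.
move=> /gcvg; rewrite nbhs_simpl => -[N _ HN].
by apply: (proj2 (gP N)); apply: HN; rewrite /= leqnn.
Qed.

Definition nwd (A : set cantor_space) := forall n (y : cantor_space),
  exists m (z : cantor_space), (n <= m)%N /\ agree n z y /\
    forall x, agree m x z -> ~ A x.
Definition meager (M : set cantor_space) :=
  exists B : nat -> set cantor_space, (forall k, nwd (B k)) /\
    forall x, M x -> exists k, B k x.

Lemma agree_le m n x y : (m <= n)%N -> agree n x y -> agree m x y.
Proof. move=> mn H i im; apply: H; exact: leq_trans im mn. Qed.
Arguments agree_le [m n x y].
Lemma agree_trans n x y z : agree n x y -> agree n y z -> agree n x z.
Proof. by move=> H1 H2 i ii; rewrite H1 // H2. Qed.
Arguments agree_trans [n x y z].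
Lemma agree_sym n x y : agree n x y -> agree n y x.
Proof. by move=> H i ii; rewrite H. Qed.
Lemma agree_refl n x : agree n x x.
Proof. by []. Qed.

Lemma baire M : meager M -> forall n (y : cantor_space),
  exists x, agree n x y /\ ~ M x.
Proof.
move=> [B [nB MB]] n y.
have step : forall k (p : nat * cantor_space), exists q : nat * cantor_space,
    (p.1 < q.1)%N /\ agree p.1 q.2 p.2 /\ forall x, agree q.1 x q.2 -> ~ B k x.
  move=> k [n0 y0] /=; have [m [z [Hm [Hz Hx]]]] := nB k n0.+1 y0.
  exists (m, z); split => //; split => //=; exact: agree_le Hz.
have [f0 f0P] := choice (fun kp : nat * (nat * cantor_space) => step kp.1 kp.2).
pose f k p := f0 (k, p).
have fP : forall k p, _ := fun k p => f0P (k, p).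
pose P := fix P k := if k is k'.+1 then f k' (P k') else (n, y).
have P1 : forall k, (n + k <= (P k).1)%N.
  elim=> [|k IH] /=; first by rewrite addn0.
  have := (fP k (P k)).1; rewrite addnS; exact: leq_ltn_trans.
have Pmono : forall k l, (k <= l)%N -> ((P k).1 <= (P l).1)%N.
  move=> k; elim=> [|l IH]; first by rewrite leqn0 => /eqP ->.
  rewrite leq_eqVlt => /orP[/eqP -> //|kl].
  apply: leq_trans (IH kl) _; exact: ltnW (fP l (P l)).1.
have Pcons : forall k l, (k <= l)%N -> agree (P k).1 (P l).2 (P k).2.
  move=> k; elim=> [|l IH]; first by rewrite leqn0 => /eqP ->.
  rewrite leq_eqVlt => /orP[/eqP -> //|kl].
  apply: agree_trans (IH kl).
  have h := (fP l (P l)).2.1; have h2 := Pmono k l kl. move=> i ik; apply: h; exact: leq_trans ik h2.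
pose x : cantor_space := fun i => (P i.+1).2 i.
have xP : forall k, agree (P k).1 x (P k).2.
  move=> k i ik; rewrite /x.
  have h1 := Pcons k (maxn k i.+1) (leq_maxl _ _).
  have h2 := Pcons i.+1 (maxn k i.+1) (leq_maxr _ _).
  rewrite -h1 // h2 //; apply: leq_trans (P1 i.+1); exact: leq_addl.
exists x; split; first exact: (xP 0).
move=> /MB [k Bk]; exact: (fP k (P k)).2.2 x (xP k.+1) Bk.
Qed.

Lemma meager_sub (M M' : set cantor_space) :
  (forall x, M' x -> M x) -> meager M -> meager M'.
Proof. move=> H [B [nB MB]]; exists B; split => // x /H; exact: MB. Qed.

Arguments meager_sub [M M'].
Lemma nwd0 : nwd set0.
Proof. by move=> n y; exists n, y; split => //; split => // x _ []. Qed.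

Lemma meager0 : meager set0.
Proof. by exists (fun _ => set0); split => //; exact: (fun _ => nwd0). Qed.

Lemma meager_bigcup (M : nat -> set cantor_space) :
  (forall j, meager (M j)) -> meager (fun x => exists j, M j x).
Proof.
move=> mM; have [B BP] := choice mM.
exists (fun j => match @unpickle (prod nat nat) j with
  Some p => B p.1 p.2 | None => set0 end); split.
  move=> j; case: (unpickle j) => [[a b]|] /=; last exact: nwd0.
  exact: (BP a).1.
move=> x [j /(BP j).2 [k Bk]]; exists (pickle (j, k)); by rewrite pickleK.
Qed.

Lemma meagerU (M1 M2 : set cantor_space) :
  meager M1 -> meager M2 -> meager (fun x => M1 x \/ M2 x).
Proof.
move=> h1 h2.
have := @meager_bigcup (fun j => if j is 0 then M1 else M2).
move=> /(_ _)/meager_sub; apply; last by case.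
by move=> x [h|h]; [exists 0 | exists 1].
Qed.

Arguments meagerU [M1 M2].
Arguments meager_bigcup [M].
Arguments baire [M].
Definition flip (s : seq nat) (x : cantor_space) : cantor_space :=
  fun i => x i (+) (i \in s).

Lemma flipK s x : flip s (flip s x) = x.
Proof. by apply: funext => i; rewrite /flip addbK. Qed.

Lemma agree_flip n s x y : agree n x (flip s y) -> agree n (flip s x) y.
Proof. by move=> H i ii; rewrite /flip H // /flip addbK. Qed.

Lemma meager_flip s M : meager M -> meager (fun x => M (flip s x)).
Proof.
move=> [B [nB MB]]; exists (fun k x => B k (flip s x)); split; last first.
  by move=> x /MB.
move=> k n y; have [m [z [nm [Hz Hx]]]] := nB k n (flip s y).
exists m, (flip s z); split => //; split; first exact: agree_flip.
move=> x /agree_flip Hxz; exact: Hx.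
Qed.

Arguments meager_flip s [M].
Definition good (A : set cantor_space) :=
  exists U, copen U /\ meager (fun x => ~ (A x <-> U x)).

Lemma good_sigma : sigma_algebra setT good.
Proof.
split.
- exists set0; split; first by move=> x.
  by apply: meager_sub meager0 => x /=; apply; split.
- move=> A [U [cU mU]].
  pose V : set cantor_space := fun x => exists n, forall z, agree n z x -> ~ U z.
  exists V; split.
    move=> x [n Hn]; exists n => z zx; exists n => w wz; apply: Hn.
    exact: agree_trans wz zx.
  pose N : set cantor_space := fun x => ~ U x /\ ~ V x.
  have nN : nwd N.
    move=> n y; have [[z [zy Uz]]|nz] := pselect (exists z, agree n z y /\ U z).
      have [n' Hn'] := cU z Uz.
      exists (maxn n n'), z; split; first exact: leq_maxl.
      split => // x xz [/(_ (Hn' x (agree_le (leq_maxr _ _) xz)))] //.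
    exists n, y; split => //; split => // x xy [_]; apply.
    exists n => z zx Uz; apply: nz; exists z; split => //.
    exact: agree_trans zx xy.
  have mN : meager N by exists (fun _ => N); split => // x Nx; exists 0.
  move: (meagerU mU mN); apply: meager_sub => x /= H.
  have [Ax|nAx] := pselect (A x).
    have Vx : V x.
      apply: contrapT => nV; apply: H; split => [[_ //]|/nV //].
    left => -[/(_ Ax) Ux _]; case: Vx => n /(_ x (agree_refl _ _)); exact.
  have nV : ~ V x by move=> Vx; apply: H; split => // _; split.
  have [Ux|nUx] := pselect (U x).
    by left => -[_ /(_ Ux)].
  by right.
- move=> A gA; have [U UP] := choice gA.
  exists (fun x => exists k, U k x); split.
    move=> x [k Ukx]; have [n Hn] := (UP k).1 x Ukx.
    by exists n => z /Hn; exists k.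
  apply: meager_sub (meager_bigcup (fun k => (UP k).2)) => x /= H.
  have [[k Akx]|nA] := pselect (exists k, A k x).
    exists k => -[/(_ Akx) Ux _]; apply: H; split => // _; by exists k.
  have [[k Ukx]|nU] := pselect (exists k, U k x).
    exists k => -[_ /(_ Ukx) Akx]; apply: nA; by exists k.
  by exfalso; apply: H; split => [[k _ Akx]|[k Ukx]]; exfalso; [apply: nA | apply: nU]; exists k.
Qed.

Lemma borel_good A : borel_set A -> good A.
Proof.
move=> BA; apply: BA; split; first exact: good_sigma.
move=> U oU; exists U; split; first exact: open_copen.
by apply: meager_sub meager0 => x /=; apply.
Qed.

Theorem theorem9 (T : set cantor_space) :
  thin T ->
  (forall x : cantor_space, exists t : cantor_space, T t /\ hamming_equiv t x) ->
  ~ borel_set T.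
Proof.
move=> thT cov /borel_good [U [cU mD]].
have [[u Uu]|nU] := pselect (exists u, U u); last first.
  pose M := fun j x => match @unpickle (seq nat) j with
    Some s => ~ (T (flip s x) <-> U (flip s x)) | None => False end.
  have mM : meager (fun x => exists j, M j x).
    apply: meager_bigcup => j; rewrite /M; case: (unpickle j) => [s|].
      exact: (meager_flip s mD).
    by apply: meager_sub meager0 => x.
  have [x [_ nMx]] := baire mM 0 (fun _ => false).
  have [t [Tt /finite_seqP [s /seteqP [h1 h2]]]] := cov x.
  have ft : flip s x = t.
    apply: funext => i; rewrite /flip; case: (boolP (i \in s)) => iS.
      have := h2 i iS; rewrite /= addbT; by case: (x i); case: (t i).
    rewrite addbF; apply/eqP; apply: contraNT iS; rewrite eq_sym => /h1; exact.
  apply: nMx; exists (pickle s); rewrite /M pickleK ft => -[/(_ Tt) Ut _].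
  by apply: nU; exists t.
have [n Hn] := cU u Uu.
have mM := meagerU mD (meager_flip [:: n] mD).
have [x [xu nMx]] := baire mM n u.
have Ux := Hn x xu.
have Tx : T x by apply: contrapT => nT; apply: nMx; left => -[_ /(_ Ux)].
have fxu : agree n (flip [:: n] x) u.
  move=> i ii; rewrite /flip inE (ltn_eqF ii) addbF; exact: xu.
have Ufx := Hn _ fxu.
have Tfx : T (flip [:: n] x).
  by apply: contrapT => nT; apply: nMx; right => -[_ /(_ Ufx)].
have H : forall k, k <> n -> x k = flip [:: n] x k.
  by move=> k /eqP kn; rewrite /flip inE (negbTE kn) addbF.
have := congr1 (fun f : cantor_space => f n) (thT n _ _ Tx Tfx H).
by rewrite /flip inE eqxx addbT /=; case: (x n).
Qed.
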